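(* Fix $\lambda\in[0,1]$. Define $f(\mathbf q,\lambda)$ for vectors $\mathbf q=(q_{i,j}^{(k)})_{i\ne j,\,k=\pm1}$ by $$f_{i,j}^{(k)}(\mathbf q,\lambda)=\lambda\Big(p_{i,j}^{(k)}+\sum_{m\ne i,j}p_{i,m}^{(k)}q_{m,j}^{(k)}+\sum_{m\ne i}p_{i,m}^{(-k)}q_{m,i}^{(-k)}q_{i,j}^{(k)}\Big),$$ and define $\mathbf a_0(\lambda)=f(\mathbf 0,\lambda)$, $\mathbf a_{n+1}(\lambda)=f(\mathbf a_n(\lambda),\lambda)$. Then for every $n\ge0$ and every index $(i,j,k)$, $$(\mathbf a_n(\lambda))_{i,j}^{(k)}\le\sum_{m=0}^{2^{n+1}-1}P_{e_i}\big(T(0,A_{i,j}^{(k)})=m\big)\lambda^m.$$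
   Context: Fix an integer $N\ge 3$. Let $\mathcal G_N$ be the groupoid with object set $\{1,\dots,N\}$ generated by arrows $A_{i,j}^{(k)}$, $i\neq j\in\{1,\dots,N\}$, $k\in\{-1,1\}$, with source $i$ and target $j$, subject to the relations $A_{i,j}^{(k)}A_{j,\ell}^{(k)}=A_{i,\ell}^{(k)}$ for all $i,j,\ell$, $k$, with the convention $A_{i,i}^{(k)}:=e_i$ (unit at object $i$). Let $\mathcal A$ be its arrow set. Let $\{W_n\}_{n\ge0}$ be the Markov chain on $\mathcal A$ with $P(W_{n+1}=y\mid W_n=x)=p_{i,j}^{(k)}$ if $x^{-1}y=A_{i,j}^{(k)}$ with $i\ne j$ and $0$ otherwise, where $p_{i,j}^{(k)}\in(0,1)$ and $\sum_{j\ne i}\sum_{k=\pm1}p_{i,j}^{(k)}=1$ for each $i$; $P_x$ denotes the law with $W_0=x$. For $x\in\mathcal A$ let $T(0,x)=\inf\{n\ge0:W_n=W_0x\}$ (possibly $\infty$). *)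

(* Defs.v *)
From mathcomp Require Import all_boot all_order all_algebra.
Set Implicit Arguments. Unset Strict Implicit. Unset Printing Implicit Defensive.
Import Order.TTheory GRing.Theory Num.Theory.
Local Open Scope ring_scope.

(* Objects {1..N} are encoded as 'I_N; the color k in {-1,1} is encoded as a
   bool: true <-> k = 1, false <-> k = -1 (so -k is ~~ k).

   Arrows of the groupoid G_N with source i are in bijection with reduced
   words: sequences of steps (v_1,k_1),...,(v_r,k_r) with v_1 <> i,
   v_t <> v_(t+1) and k_t <> k_(t+1) (alternating colors); the arrow is
   A_{i,v_1}^{(k_1)} A_{v_1,v_2}^{(k_2)} ... (free product of the two pair
   groupoids of colors +1 and -1).  We store the word reversed (last step
   first).  The identity e_i is the empty word. *)

Section Groupoid.
Variable N : nat.
Definition step_t := ('I_N * bool)%type.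

Definition gtarget (i : 'I_N) (w : seq step_t) : 'I_N :=
  match w with [::] => i | (v, _) :: _ => v end.

(* right multiplication x |-> x * A_{t,j}^{(k)} where t = gtarget i w,
   assuming j <> t; uses A_{a,b}^{(k)} A_{b,c}^{(k)} = A_{a,c}^{(k)} and
   A_{a,a}^{(k)} = e_a. *)
Definition gstep (i : 'I_N) (w : seq step_t) (x : step_t) : seq step_t :=
  match w with
  | [::] => [:: x]
  | (v, k') :: w' =>
      if k' == x.2 then
        (if x.1 == gtarget i w' then w' else x :: w')
      else x :: w
  end.

(* the successive positions W_1, ..., W_m of the walk started at the arrow
   (i, w) and performing the generator steps s *)
Fixpoint gtraj (i : 'I_N) (w : seq step_t) (s : seq step_t) : seq (seq step_t) :=
  match s with
  | [::] => [::]
  | x :: s' => let w' := gstep i w x in w' :: gtraj i w' s'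
  end.

Variable R : numDomainType.
Variable p : 'I_N -> 'I_N -> bool -> R.

Fixpoint gweight (i : 'I_N) (w : seq step_t) (s : seq step_t) : R :=
  match s with
  | [::] => 1
  | x :: s' =>
      (if x.1 != gtarget i w then p (gtarget i w) x.1 x.2 else 0)
      * gweight i (gstep i w x) s'
  end.

(* P_{e_i}( T(0, A_{i,j}^{(k)}) = m ): sum, over all step sequences of
   length m, of their probability, restricted to those for which the first
   time n >= 0 with W_n = W_0 A_{i,j}^{(k)} = A_{i,j}^{(k)} equals m. *)
Definition hitP (i j : 'I_N) (k : bool) (m : nat) : R :=
  \sum_(s : m.-tuple step_t)
     (if index [:: (j, k)] ([::] :: gtraj i [::] s) == m
      then gweight i [::] s else 0).

Definition fmap (q : 'I_N -> 'I_N -> bool -> R) (lam : R)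
    (i j : 'I_N) (k : bool) : R :=
  lam * (p i j k
         + \sum_(m : 'I_N | (m != i) && (m != j)) p i m k * q m j k
         + \sum_(m : 'I_N | m != i) p i m (~~ k) * q m i (~~ k) * q i j k).

Fixpoint aseq (lam : R) (n : nat) : 'I_N -> 'I_N -> bool -> R :=
  match n with
  | 0 => fmap (fun _ _ _ => 0) lam
  | n'.+1 => fmap (aseq lam n') lam
  end.

End Groupoid.

(* Main.v *)
Require Import Defs.
From mathcomp Require Import all_boot all_order all_algebra.
From mathcomp Require Import ring.
Set Implicit Arguments. Unset Strict Implicit. Unset Printing Implicit Defensive.
Import Order.TTheory GRing.Theory Num.Theory.

Section Comb.
Variable N : nat.
Local Notation T := (step_t N).

Fixpoint bot (w : seq T) : option T :=
  match w with [::] => None | y :: w' => if w' is [::] then Some y else bot w' end.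

Definition Inv (b : 'I_N) (w : seq T) :=
  (if bot w is Some y then y.1 != b else true) && sorted (fun y z => y.2 != z.2) w.

Section Lm.
Variables (i m : 'I_N) (c : bool).
Fixpoint lm (w : seq T) : seq T :=
  match w with
  | [::] => [:: (m, c)]
  | y :: w' => if w' is [::] then
                 (if y.2 == c then (if y.1 == i then [::] else [:: y]) else [:: y; (m, c)])
               else y :: lm w'
  end.

Lemma lm_target w : gtarget i (lm w) = gtarget m w.
Proof.
case: w => [|[v k] [|z w']] //=.
by case: ifP => _; [case: ifP => // /eqP -> | ].
Qed.

Lemma lm_cons y w : w != [::] -> lm (y :: w) = y :: lm w.
Proof. by case: w. Qed.

Lemma lm_nil w : lm w = [::] -> w = [:: (i, c)].
Proof.
case: w => [|[v k] [|z w']] //=.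
by case: eqP => // ->; case: eqP => // ->.
Qed.

Lemma gstep_lm w x : Inv m w -> x.1 != gtarget m w -> i != m ->
  gstep i (lm w) x = lm (gstep m w x).
Proof.
case: x => xv xk /=.
case: w => [|[v k] [|[z kz] w']].
- rewrite /=; move=> _ hx him; case: eqP => [<-|hk].
  by rewrite eqxx; case: eqP.
  by rewrite (introF eqP (nesym hk)).
- rewrite /Inv /= andbT => hv hx him /=.
  case: (k =P c) => [?|hkc]; case: (v =P i) => [?|hvi]; case: (k =P xk) => [?|hkx];
   case: (xv =P m) => [?|hxm]; subst => /=; rewrite ?eqxx /=;
   try (case: (xv =P i) => [?|?]; subst); rewrite ?eqxx /=;
   try by [ | rewrite eqxx in hx | rewrite eq_sym (negPf him) | rewrite ?(negPf hx) ?(negPf hv) ?(negPf him) ?(introF eqP hkc) ?(introF eqP hkx) ?(introF eqP (nesym hkx)) ?(introF eqP hvi) ?(introF eqP hxm) ?eqxx /=].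
- move=> hI hx him.
  rewrite lm_cons //; have := lm_target ((z, kz) :: w').
  set L := lm ((z, kz) :: w') => hL /=.
  case: (k =P xk) => [<-|hkx] /=.
  + rewrite hL; case: (xv =P gtarget m ((z, kz) :: w')) => // _.
  + by [].
Qed.

Lemma lm_single j w : Inv m w -> m != j -> j != i -> lm w = [:: (j, c)] -> w = [:: (j, c)].
Proof.
case: w => [|[v k] [|[z kz] w']].
- by move=> _ hmj _ [/eqP]; rewrite (negPf hmj).
- by move=> _ _ _ /=; case: eqP => _; [case: eqP|].
- rewrite lm_cons // /Inv /= => /andP[_ /andP[hk _]] _ _ [hv hk' E].
  by move: (@lm_nil ((z, kz) :: w') E) => [hz hkz hw]; rewrite hk' hkz eqxx in hk.

Qed.

Lemma lm_fix j : j != i -> lm [:: (j, c)] = [:: (j, c)].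
Proof. by move=> hj /=; rewrite eqxx (negPf hj). Qed.

Lemma lm_bot j w : lm w = [:: (j, ~~ c)] -> bot w = Some (i, c).
Proof.
case: w => [|[v k] [|[z kz] w']].
- by case; case: c.
- rewrite /=; case: eqP => [->|]; last by [].
  by case: eqP => // _ [_]; case: c.
- rewrite lm_cons // => [[_ _ E]].
  by move: (@lm_nil ((z, kz) :: w') E) => [-> -> ->].
Qed.

End Lm.

Lemma Inv_gstep (b : 'I_N) (w : seq T) (x : T) : Inv b w -> x.1 != gtarget b w -> Inv b (gstep b w x).
Proof.
case: x => xv xk.
case: w => [|[v k] [|[z kz] w']] /=.
- by rewrite /Inv /= andbT.
- rewrite /Inv /= !andbT => hv hx.
  case: (k =P xk) => [_|hkx] /=; last by rewrite hv andbT eq_sym; apply/eqP.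
  by case: (xv =P b) => [//|hxb] /=; rewrite andbT; apply/eqP.
- rewrite /Inv /= => /andP[hb /andP[hk hp]] hx.
  case: (k =P xk) => [<-|hkx].
  + case: eqP => _; first by rewrite /Inv hb.
    by rewrite /Inv /= hb hk hp.
  + by rewrite /Inv /= hb hk hp !andbT eq_sym; apply/eqP.
Qed.

Lemma bot_gstep (b : 'I_N) (w : seq T) (x : T) : bot (gstep b w x) = bot w \/ (size (gstep b w x) <= 1)%N.
Proof.
case: x => xv xk.
case: w => [|[v k] [|[z kz] w']] /=.
- by right.
- by case: eqP => _; [case: eqP => _; right | left].
- by case: eqP => _; [case: eqP => _; left | left].
Qed.

Fixpoint fin (b : 'I_N) (w : seq T) (s : seq T) :=
  if s is x :: s' then fin b (gstep b w x) s' else w.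

Lemma gtraj_cat (b : 'I_N) (w s1 s2 : seq T) :
  gtraj b w (s1 ++ s2) = gtraj b w s1 ++ gtraj b (fin b w s1) s2.
Proof. by elim: s1 w => //= x s1 IH w; rewrite IH. Qed.

Lemma fin_last (b : 'I_N) (w s : seq T) : fin b w s = last w (gtraj b w s).
Proof. by elim: s w => //= x s IH w. Qed.

Lemma size_gtraj (b : 'I_N) (w s : seq T) : size (gtraj b w s) = size s.
Proof. by elim: s w => //= x s IH w; rewrite IH. Qed.

Lemma gtraj_take (b : 'I_N) (w s : seq T) n : gtraj b w (take n s) = take n (gtraj b w s).
Proof. by elim: s w n => [|x s IH] w [|n] //=; rewrite IH. Qed.

Lemma bot_traj (b : 'I_N) (d : T) (w s : seq T) : bot w != Some d -> [:: d] \notin gtraj b w s ->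
  forall y, y \in gtraj b w s -> bot y != Some d.
Proof.
elim: s w => //= x s IH w hw; rewrite in_cons negb_or => /andP[hd hs] y.
have hw' : bot (gstep b w x) != Some d.
  case: (bot_gstep b w x) => [->//|].
  case E: (gstep b w x) => [|z [|? ?]] //= _.
  by apply: contra hd => /eqP [<-]; rewrite E.
by rewrite in_cons => /orP[/eqP ->|]; [|apply: IH].
Qed.

End Comb.

Section W.
Variable N : nat.
Local Notation T := (step_t N).
Variables (R : numDomainType) (p : 'I_N -> 'I_N -> bool -> R).
Local Open Scope ring_scope.

Lemma gweight_cat (b : 'I_N) (w s1 s2 : seq T) :
  gweight p b w (s1 ++ s2) = gweight p b w s1 * gweight p b (fin b w s1) s2.
Proof. by elim: s1 w => /= [|x s1 IH] w; rewrite ?mul1r // IH mulrA. Qed.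

Lemma gweight_ge0 (b : 'I_N) (w s : seq T) :
  (forall a a' k, a != a' -> 0 <= p a a' k) -> 0 <= gweight p b w s.
Proof.
move=> hp; elim: s w => /= [|x s IH] w //.
by apply: mulr_ge0 => //; case: ifP => // h; apply: hp; rewrite eq_sym.
Qed.

Lemma gweight_lm i m c (w s : seq T) : Inv m w -> i != m ->
  gweight p i (lm i m c w) s = gweight p m w s.
Proof.
elim: s w => //= x s IH w hI him.
rewrite lm_target; case: ifP => hx; last by rewrite !mul0r.
by rewrite gstep_lm // IH // Inv_gstep.
Qed.

Lemma gtraj_lm i m c (w s : seq T) : Inv m w -> i != m -> gweight p m w s != 0 ->
  gtraj i (lm i m c w) s = map (lm i m c) (gtraj m w s).
Proof.
elim: s w => //= x s IH w hI him.
rewrite mulf_eq0 negb_or => /andP[h1 h2].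
have hx : x.1 != gtarget m w by move: h1; case: ifP => // _; rewrite eqxx.
by rewrite gstep_lm // IH // Inv_gstep.
Qed.

End W.

Section PS.
Variable N : nat.
Local Notation T := (step_t N).
Variable R : numDomainType.
Local Open Scope ring_scope.

Fixpoint psum (n : nat) (F : seq T -> R) : R :=
  match n with 0 => F [::] | n'.+1 => \sum_(x : T) psum n' (fun s => F (x :: s)) end.

Lemma tuple_psum n (F : seq T -> R) : \sum_(s : n.-tuple T) F (tval s) = psum n F.
Proof.
elim: n F => [|n IH] F /=.
  rewrite (eq_bigr (fun _ => F [::])) => [|s _]; last by rewrite tuple0.
  by rewrite sumr_const card_tuple expn0.
rewrite (reindex (fun q : T * n.-tuple T => [tuple of q.1 :: q.2])) /=; last first.
  exists (fun t : n.+1.-tuple T => (thead t, [tuple of behead t])).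
    by case=> x t _ /=; congr pair; apply: val_inj.
  by move=> t _; rewrite [RHS]tuple_eta.
rewrite -(pair_big predT predT (fun x (t : n.-tuple T) => F (x :: tval t))) /=.
by apply: eq_bigr => x _; exact: (IH (fun s => F (x :: s))).
Qed.

Lemma psum_ext n (F G : seq T -> R) : (forall s, size s = n -> F s = G s) ->
  psum n F = psum n G.
Proof.
elim: n F G => [|n IH] F G h /=; first by apply: h.
by apply: eq_bigr => x _; apply: IH => s hs; apply: h; rewrite /= hs.
Qed.

Lemma psum_le n (F G : seq T -> R) : (forall s, size s = n -> F s <= G s) ->
  psum n F <= psum n G.
Proof.
elim: n F G => [|n IH] F G h /=; first by apply: h.
by apply: ler_sum => x _; apply: IH => s hs; apply: h; rewrite /= hs.
Qed.

Lemma psum_ge0 n (F : seq T -> R) : (forall s, size s = n -> 0 <= F s) ->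
  0 <= psum n F.
Proof.
move=> h; have -> : 0 = psum n (fun _ => 0).
  by elim: n {h} => //= n IH; rewrite big1 // => x _; exact: (esym IH).
by apply: psum_le => s hs; rewrite h.
Qed.

Lemma psumZ n c (F : seq T -> R) : psum n (fun s => c * F s) = c * psum n F.
Proof.
elim: n F => //= n IH F; rewrite mulr_sumr; apply: eq_bigr => x _.
by rewrite IH.
Qed.

Lemma psum_sum n u (F : nat -> seq T -> R) :
  psum n (fun s => \sum_(a < u) F a s) = \sum_(a < u) psum n (F a).
Proof.
elim: n F => //= n IH F; rewrite exchange_big /=; apply: eq_bigr => x _.
by rewrite (IH (fun a s => F a (x :: s))).
Qed.

Lemma psum_cat a b (F : seq T -> R) :
  psum (a + b) F = psum a (fun s1 => psum b (fun s2 => F (s1 ++ s2))).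
Proof.
elim: a F => //= a IH F; apply: eq_bigr => x _.
by rewrite (IH (fun s => F (x :: s))).
Qed.

End PS.

Lemma index_map_eq (A : eqType) (f : A -> A) (a : A) (L : seq A) :
  (forall y, y \in L -> (f y == a) = (y == a)) -> index a (map f L) = index a L.
Proof.
elim: L => //= y L IH h.
rewrite h ?mem_head //; case: eqP => // _.
by rewrite IH // => z hz; apply: h; rewrite in_cons hz orbT.
Qed.

Section Main.
Variable N : nat.
Local Notation T := (step_t N).
Variables (R : realFieldType) (p : 'I_N -> 'I_N -> bool -> R).
Local Open Scope ring_scope.
Hypothesis hp0 : forall a a' k, a != a' -> 0 <= p a a' k.

Definition Fhit (i j : 'I_N) (k : bool) (a : nat) (s : seq T) : R :=
  if index [:: (j, k)] ([::] :: gtraj i [::] s) == a then gweight p i [::] s else 0.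

Lemma hitP_psum i j k a : hitP p i j k a = psum a (Fhit i j k a).
Proof. exact: (tuple_psum a (Fhit i j k a)). Qed.

Lemma Fhit_ge0 i j k a s : 0 <= Fhit i j k a s.
Proof. by rewrite /Fhit; case: ifP => // _; apply: gweight_ge0. Qed.

Lemma hitP_ge0 i j k a : 0 <= hitP p i j k a.
Proof. by rewrite hitP_psum; apply: psum_ge0 => s _; apply: Fhit_ge0. Qed.

Lemma hitP0 i j k : hitP p i j k 0 = 0.
Proof. by rewrite hitP_psum. Qed.

Lemma Inv_traj b (w s : seq T) : Inv b w -> gweight p b w s != 0 ->
  forall y, y \in gtraj b w s -> Inv b y.
Proof.
elim: s w => //= x s IH w hI.
rewrite mulf_eq0 negb_or => /andP[h1 h2].
have hx : x.1 != gtarget b w by move: h1; case: ifP => // _; rewrite eqxx.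
have hI' := Inv_gstep hI hx.
by move=> y; rewrite in_cons => /orP[/eqP ->|]; [|apply: IH].
Qed.

Lemma P1 i j k : i != j -> Fhit i j k 1 [:: (j, k)] = p i j k.
Proof. by move=> hij; rewrite /Fhit /= eqxx /= eq_sym hij mulr1. Qed.

Lemma index_cons_ne (A : eqType) (x y : A) L : y != x -> index x (y :: L) = (index x L).+1.
Proof. by move=> h /=; rewrite (negPf h). Qed.

Lemma P2 i j k m u (s : seq T) : m != i -> m != j -> i != j -> size s = u ->
  Fhit i j k u.+1 ((m, k) :: s) = p i m k * Fhit m j k u s.
Proof.
move=> hmi hmj hij hs; rewrite /Fhit.
have him : i != m by rewrite eq_sym.
have hI0 : Inv m [::] by [].
have eW : gweight p i [::] ((m, k) :: s) = p i m k * gweight p m [::] s.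
  by rewrite /= hmi; congr (_ * _); exact: (gweight_lm p k s hI0 him).
rewrite eW.
have [w0|wn0] := eqVneq (gweight p m [::] s) 0.
  by rewrite w0 mulr0; case: ifP; case: ifP; rewrite ?mulr0.
have eT : [::] :: gtraj i [::] ((m, k) :: s) =
          [::] :: map (lm i m k) ([::] :: gtraj m [::] s).
  by rewrite /=; congr (_ :: _ :: _); exact: (gtraj_lm k hI0 him wn0).
rewrite eT index_cons_ne // index_map_eq; last first.
  move=> y hy; have hIy : Inv m y.
    by move: hy; rewrite in_cons => /orP[/eqP ->//|]; apply: Inv_traj.
  have hji : j != i by rewrite eq_sym.
  case: eqP => [/(lm_single hIy hmj hji) ->|hne]; first by rewrite eqxx.
  by apply/esym/eqP => hy'; apply: hne; rewrite hy' lm_fix // eq_sym.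
by rewrite eqSS; case: ifP; rewrite ?mulr0.
Qed.

Lemma uniq_idx m i c a (s : seq T) : (a <= size s)%N ->
  Fhit m i c a (take a s) != 0 -> index [:: (i, c)] ([::] :: gtraj m [::] s) = a.
Proof.
move=> ha; rewrite /Fhit; case: ifP => [/eqP hidx _|]; last by rewrite eqxx.
rewrite -(cat_take_drop a s) gtraj_cat -cat_cons index_cat.
have hin : [:: (i, c)] \in [::] :: gtraj m [::] (take a s).
  by rewrite -index_mem hidx /= size_gtraj size_take_min (minn_idPl ha).
by rewrite hin hidx.
Qed.

Lemma K3 i j k m (s1 s2 : seq T) : m != i -> i != j ->
  Fhit m i (~~ k) (size s1) s1 * Fhit i j k (size s2) s2 != 0 ->
  p i m (~~ k) * (Fhit m i (~~ k) (size s1) s1 * Fhit i j k (size s2) s2)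
  = Fhit i j k (size s1 + size s2).+1 ((m, ~~ k) :: s1 ++ s2).
Proof.
move=> hmi hij; set c := ~~ k.
have him : i != m by rewrite eq_sym.
have hI0 : Inv m [::] by [].
rewrite mulf_eq0 negb_or => /andP[h1 h2].
move: h1 h2; rewrite {1 2}/Fhit.
case: ifP => [/eqP hidx1 w1|]; last by rewrite eqxx.
case: ifP => [/eqP hidx2 w2|]; last by rewrite eqxx.
case/lastP: s1 hidx1 w1 => [|s1' x1] hidx1 w1; first by [].
set T1' := gtraj m [::] s1'.
set z := gstep m (fin m [::] s1') x1.
have eT1 : gtraj m [::] (rcons s1' x1) = T1' ++ [:: z].
  by rewrite -cats1 gtraj_cat.
have hnotin : [:: (i, c)] \notin [::] :: T1'.
  apply/negP => hin.
  have hlt : (index [:: (i, c)] ([::] :: T1') < size ([::] :: T1'))%N by rewrite index_mem.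
  move: hidx1; rewrite eT1 -cat_cons index_cat hin size_rcons => heq.
  by move: hlt; rewrite heq /= /T1' size_gtraj ltnn.
have hz : z = [:: (i, c)].
  move: hidx1; rewrite eT1 -cat_cons index_cat (negPf hnotin) /= size_gtraj size_rcons.
  by case: eqP => // _ /eqP; rewrite -[X in _ == X]addn0 eqn_add2l.
have eT : gtraj i [:: (m, c)] (rcons s1' x1) = map (lm i m c) (T1' ++ [:: z]).
  by rewrite -eT1; exact: (gtraj_lm c hI0 him w1).
have efin : fin i [:: (m, c)] (rcons s1' x1) = [::].
  by rewrite fin_last eT map_cat last_cat /= hz /= !eqxx.
have eW : gweight p i [::] ((m, c) :: rcons s1' x1 ++ s2) =
          p i m c * (gweight p m [::] (rcons s1' x1) * gweight p i [::] s2).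
  rewrite /= hmi gweight_cat efin; congr (_ * (_ * _)).
  exact: (gweight_lm p c _ hI0 him).
have hnj : [:: (j, k)] \notin map (lm i m c) ([::] :: T1').
  apply/mapP => [[y hy hyeq]].
  have hb : bot y = Some (i, c).
    by apply: (@lm_bot _ i m c j); rewrite -hyeq /c negbK.
  move: hy; rewrite in_cons => /orP[/eqP hy0|hy]; first by rewrite hy0 in hb.
  have hn : [:: (i, c)] \notin T1' by move: hnotin; rewrite in_cons negb_or => /andP[_].
  by move: (bot_traj (b := m) (w := [::]) (s := s1') (d := (i, c)) isT hn hy); rewrite hb eqxx.
have eI : index [:: (j, k)] ([::] :: gtraj i [::] ((m, c) :: rcons s1' x1 ++ s2)) =
          (size (rcons s1' x1) + size s2).+1.
  have -> : [::] :: gtraj i [::] ((m, c) :: rcons s1' x1 ++ s2) =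
     [::] :: (map (lm i m c) ([::] :: T1') ++ ([::] :: gtraj i [::] s2)).
    rewrite /= gtraj_cat efin eT map_cat hz /= !eqxx /= -catA /=.
    by [].
  rewrite index_cons_ne // index_cat (negPf hnj) hidx2 /= size_map size_rcons.
  by rewrite /T1' size_gtraj.
by rewrite /Fhit eI eqxx eW hidx1 hidx2 !eqxx.
Qed.

Lemma P3 i j k m u (s : seq T) : m != i -> i != j -> size s = u ->
  p i m (~~ k) * \sum_(a < u.+1) (Fhit m i (~~ k) a (take a s) * Fhit i j k (u - a)%N (drop a s))
  <= Fhit i j k u.+1 ((m, ~~ k) :: s).
Proof.
move=> hmi hij hs.
set term := fun a : 'I_u.+1 => Fhit m i (~~ k) a (take a s) * Fhit i j k (u - a)%N (drop a s).
have hK : forall a : 'I_u.+1, term a != 0 ->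
    (index [:: (i, ~~ k)] ([::] :: gtraj m [::] s) = a) /\
    (p i m (~~ k) * term a = Fhit i j k u.+1 ((m, ~~ k) :: s)).
  move=> a ha.
  have hau : (a <= u)%N by rewrite -ltnS.
  have hs1 : size (take a s) = a by rewrite size_take_min hs (minn_idPl hau).
  have hs2 : size (drop a s) = (u - a)%N by rewrite size_drop hs.
  split.
    apply: uniq_idx; first by rewrite hs.
    by move: ha; rewrite /term mulf_eq0 negb_or => /andP[].
  have := K3 (s1 := take a s) (s2 := drop a s) hmi hij.
  by rewrite hs1 hs2 cat_take_drop subnKC //; apply.
case: (boolP [exists a : 'I_u.+1, term a != 0]) => [/existsP [a0 ha0]|/existsPn hn].
- rewrite (bigD1 a0) //= big1 ?addr0 => [|a' hne]; first by rewrite (hK a0 ha0).2.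
  have [//|hz] := eqVneq (term a') 0.
  have ea : a' = a0 by apply/val_inj; rewrite /= -(hK _ hz).1 (hK _ ha0).1.
  by rewrite ea eqxx in hne.
- rewrite big1 ?mulr0 ?Fhit_ge0 // => a _; apply/eqP; move: (hn a).
  by rewrite negbK.
Qed.

End Main.

Section Sums.
Variable R : realFieldType.
Local Open Scope ring_scope.

Lemma sub_sum_le (F : nat -> R) m n M : (m <= n)%N -> (n <= M)%N ->
  (forall u, 0 <= F u) -> \sum_(m <= u < n) F u <= \sum_(0 <= u < M) F u.
Proof.
move=> hmn hnM hF.
rewrite (big_cat_nat (leq0n m) (leq_trans hmn hnM)) /= (big_cat_nat hmn hnM) /=.
by rewrite addrCA lerDl addr_ge0 // sumr_ge0.
Qed.

Lemma ord_widen_le (F : nat -> R) L M : (L <= M)%N -> (forall u, 0 <= F u) ->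
  \sum_(u < L) F u <= \sum_(u < M) F u.
Proof.
by move=> hLM hF; rewrite -!(big_mkord xpredT); apply: sub_sum_le.
Qed.

Lemma conv_le (H1 H2 : nat -> R) (lam : R) l : 0 <= lam ->
  (forall a, 0 <= H1 a) -> (forall a, 0 <= H2 a) ->
  (\sum_(a < l.+1) H1 a * lam ^+ a) * (\sum_(b < l.+1) H2 b * lam ^+ b)
  <= \sum_(u < (l.*2).+1) (\sum_(a < u.+1) H1 a * H2 (u - a)%N) * lam ^+ u.
Proof.
move=> hl h1 h2.
set M := (l.*2).+1.
set K := fun a u : nat => if (a <= u)%N then H1 a * H2 (u - a)%N * lam ^+ u else 0.
have K0 : forall a u, 0 <= K a u.
  by move=> a u; rewrite /K; case: ifP => // _; rewrite !mulr_ge0 // exprn_ge0.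
have -> : \sum_(u < M) (\sum_(a < u.+1) H1 a * H2 (u - a)%N) * lam ^+ u =
          \sum_(u < M) \sum_(a < M) K a u.
  apply: eq_bigr => u _.
  rewrite (big_ord_widen M (fun a => H1 a * H2 (u - a)%N)) ?ltn_ord // big_mkcond mulr_suml.
  by apply: eq_bigr => a _; rewrite /K ltnS; case: ifP; rewrite ?mul0r.
rewrite exchange_big /=.
have hLM : (l.+1 <= M)%N by rewrite /M ltnS -addnn leq_addl.
have hW := ord_widen_le (F := fun a => \sum_(u < M) K a u) hLM (fun a => sumr_ge0 _ (fun (u : 'I_M) _ => K0 a u)).
apply: (le_trans _ hW).
rewrite mulr_suml; apply: ler_sum => a _.
rewrite mulr_sumr -(big_mkord xpredT (K a)).
have haM : (a + l.+1 <= M)%N.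
  by rewrite /M -addnn addnS ltnS leq_add2r -ltnS ltn_ord.
apply: (le_trans _ (sub_sum_le (leq_addr _ _) haM (fun u => K0 a u))).
have := big_addn 0 (a + l.+1) a xpredT (K a); rewrite add0n => ->.
rewrite addKn big_mkord le_eqVlt; apply/orP; left; apply/eqP.
apply: eq_bigr => b _; rewrite /K leq_addl addnK exprD.
by rewrite mulrA -!mulrA; congr (_ * _); rewrite mulrC -!mulrA; congr (_ * _); rewrite mulrC.
Qed.

End Sums.

Section Key.
Variable N : nat.
Local Notation T := (step_t N).
Variables (R : realFieldType) (p : 'I_N -> 'I_N -> bool -> R).
Local Open Scope ring_scope.
Hypothesis hp0 : forall a a' k, a != a' -> 0 <= p a a' k.
Variable lam : R.
Hypothesis hl0 : 0 <= lam.

Definition HF (i j : 'I_N) (k : bool) (L : nat) := \sum_(a < L) hitP p i j k a * lam ^+ a.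

Lemma HF_ge0 i j k L : 0 <= HF i j k L.
Proof. by apply: sumr_ge0 => a _; rewrite mulr_ge0 ?exprn_ge0 ?(hitP_ge0 hp0). Qed.

Definition Zt i j k (x : T) M :=
  \sum_(u < M) psum u (fun s => Fhit p i j k u.+1 (x :: s)) * lam ^+ u.+1.

Lemma Zt_ge0 i j k x M : 0 <= Zt i j k x M.
Proof.
apply: sumr_ge0 => u _; rewrite mulr_ge0 ?exprn_ge0 //.
by apply: psum_ge0 => s _; exact: (Fhit_ge0 hp0).
Qed.

Lemma HF_split i j k M : HF i j k M.+1 = \sum_(x : T) Zt i j k x M.
Proof.
rewrite /HF big_ord_recl hitP0 // mul0r add0r /Zt exchange_big /=.
apply: eq_bigr => u _; rewrite /bump /= add1n hitP_psum /= mulr_suml.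
by [].
Qed.

Lemma Z1 i j k M : i != j -> lam * p i j k <= Zt i j k (j, k) M.+1.
Proof.
move=> hij; rewrite /Zt big_ord_recl /= (P1 p k hij) expr1 mulrC.
rewrite lerDl; apply: sumr_ge0 => u _; rewrite mulr_ge0 ?exprn_ge0 //.
by apply: sumr_ge0 => x _; apply: psum_ge0 => s _; exact: (Fhit_ge0 hp0).
Qed.

Lemma Z2 i j k m L M : m != i -> m != j -> i != j -> (L <= M)%N ->
  lam * (p i m k * HF m j k L) <= Zt i j k (m, k) M.
Proof.
move=> hmi hmj hij hLM.
have e : forall u, psum u (fun s => Fhit p i j k u.+1 ((m, k) :: s)) = p i m k * hitP p m j k u.
  move=> u; rewrite hitP_psum -psumZ; apply: psum_ext => s hs.
  exact: P2.
rewrite /Zt (eq_bigr (fun u : 'I_M => p i m k * hitP p m j k u * lam ^+ u.+1)); last first.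
  by move=> u _; rewrite e.
rewrite /HF mulr_sumr mulr_sumr.
rewrite (eq_bigr (fun u : 'I_L => p i m k * hitP p m j k u * lam ^+ u.+1)); last first.
  by move=> u _; rewrite exprS; ring.
apply: (ord_widen_le (F := fun u => p i m k * hitP p m j k u * lam ^+ u.+1)) => // u.
by rewrite !mulr_ge0 ?exprn_ge0 ?(hitP_ge0 hp0) // hp0 // eq_sym.
Qed.

Lemma psum_split (F1 F2 : seq T -> R) a u : (a <= u)%N ->
  psum u (fun s => F1 (take a s) * F2 (drop a s)) = psum a F1 * psum (u - a) F2.
Proof.
move=> hau.
transitivity (psum (a + (u - a)) (fun s => F1 (take a s) * F2 (drop a s))).
  by rewrite subnKC.
rewrite psum_cat.
transitivity (psum a (fun s1 => psum (u - a) F2 * F1 s1)).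
  apply: psum_ext => s1 hs1; rewrite mulrC -psumZ; apply: psum_ext => s2 _.
  by rewrite take_size_cat // drop_size_cat.
by rewrite psumZ mulrC.
Qed.

Lemma Z3 i j k m l : m != i -> i != j ->
  lam * (p i m (~~ k) * HF m i (~~ k) l.+1 * HF i j k l.+1) <= Zt i j k (m, ~~ k) (l.*2).+1.
Proof.
move=> hmi hij.
set M := (l.*2).+1.
have e : forall u, p i m (~~ k) * \sum_(a < u.+1) (hitP p m i (~~ k) a * hitP p i j k (u - a)%N)
                   <= psum u (fun s => Fhit p i j k u.+1 ((m, ~~ k) :: s)).
  move=> u.
  apply: le_trans (psum_le (G := fun s => Fhit p i j k u.+1 ((m, ~~ k) :: s))
     (F := fun s => p i m (~~ k) * \sum_(a < u.+1) (Fhit p m i (~~ k) a (take a s) *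
                     Fhit p i j k (u - a)%N (drop a s))) _); last first.
    by move=> s hs; exact: (P3 hp0 k hmi hij hs).
  rewrite psumZ (psum_sum u u.+1 (fun a s => Fhit p m i (~~ k) a (take a s) *
                     Fhit p i j k (u - a)%N (drop a s))).
  rewrite le_eqVlt; apply/orP; left; apply/eqP; congr (_ * _); apply: eq_bigr => a _.
  by rewrite psum_split -?hitP_psum // -ltnS.
apply: (le_trans _ (ler_sum _ (fun (u : 'I_M) _ => ler_wpM2r (exprn_ge0 u.+1 hl0) (e u)))).
rewrite (eq_bigr (fun u : 'I_M => lam * (p i m (~~ k) *
   ((\sum_(a < u.+1) hitP p m i (~~ k) a * hitP p i j k (u - a)%N) * lam ^+ u)))); last first.
  by move=> u _; rewrite exprS; ring.
rewrite -!mulr_sumr -[p i m (~~ k) * _ * _]mulrA; apply: ler_wpM2l => //; apply: ler_wpM2l; first by apply: hp0; rewrite eq_sym.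
exact: (conv_le (H1 := hitP p m i (~~ k)) (H2 := hitP p i j k) l hl0 (hitP_ge0 hp0 m i (~~ k))
          (hitP_ge0 hp0 i j k)).
Qed.

End Key.

Section Final.
Variable N : nat.
Local Notation T := (step_t N).
Variables (R : realFieldType) (p : 'I_N -> 'I_N -> bool -> R).
Local Open Scope ring_scope.
Hypothesis hp0 : forall a a' k, a != a' -> 0 <= p a a' k.
Variable lam : R.
Hypothesis hl0 : 0 <= lam.

Lemma key i j k l : i != j ->
  fmap p (fun a b c => HF p lam a b c l.+1) lam i j k <= HF p lam i j k (l.+1).*2.
Proof.
move=> hij.
set M := (l.*2).+1.
have hLM : (l.+1 <= M)%N by rewrite /M ltnS -addnn leq_addl.
rewrite doubleS HF_split.
have eZ : \sum_(x : T) Zt p lam i j k x M =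
          \sum_(v : 'I_N) (Zt p lam i j k (v, k) M + Zt p lam i j k (v, ~~ k) M).
  transitivity (\sum_(v : 'I_N) \sum_(b : bool) Zt p lam i j k (v, b) M).
    by rewrite [RHS]pair_big; apply: eq_big => // -[v b].
  by apply: eq_bigr => v _; rewrite big_bool; case: k; rewrite //= addrC.
rewrite eZ big_split /=.
rewrite /fmap !mulrDr mulr_sumr mulr_sumr.
apply: lerD.
- rewrite [X in _ <= X](bigD1 j) //=; apply: lerD; first exact: Z1.
  rewrite [X in _ <= X](bigID (fun v => v != i)) /=; apply: ler_wpDr.
    by apply: sumr_ge0 => v _; apply: Zt_ge0.
  rewrite [X in _ <= X](eq_bigl (fun v => (v != i) && (v != j))) => [|v]; last by rewrite andbC.
  by apply: ler_sum => v /andP[hvi hvj]; apply: Z2.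
- rewrite [X in _ <= X](bigID (fun v => v != i)) /=; apply: ler_wpDr.
    by apply: sumr_ge0 => v _; apply: Zt_ge0.
  by apply: ler_sum => v hv; apply: Z3.
Qed.

Lemma fmap_mono (q q' : 'I_N -> 'I_N -> bool -> R) i j k :
  (forall a b c, a != b -> 0 <= q a b c <= q' a b c) -> i != j ->
  fmap p q lam i j k <= fmap p q' lam i j k.
Proof.
move=> hq hij; rewrite /fmap; apply: ler_wpM2l => //; apply: lerD; first apply: lerD => //.
- apply: ler_sum => m /andP[hmi hmj]; apply: ler_wpM2l; first by apply: hp0; rewrite eq_sym.
  by case/andP: (hq m j k hmj).
- apply: ler_sum => m hmi.
  case/andP: (hq m i (~~ k) hmi) => h1 h2; case/andP: (hq i j k hij) => h3 h4.
  apply: ler_pM => //; first by rewrite mulr_ge0 // hp0 // eq_sym.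
  by apply: ler_wpM2l => //; apply: hp0; rewrite eq_sym.
Qed.

Lemma fmap_ge0 (q : 'I_N -> 'I_N -> bool -> R) i j k :
  (forall a b c, a != b -> 0 <= q a b c) -> i != j -> 0 <= fmap p q lam i j k.
Proof.
move=> hq hij; rewrite /fmap; apply: mulr_ge0 => //; apply: addr_ge0; first apply: addr_ge0.
- exact: hp0.
- by apply: sumr_ge0 => m /andP[hmi hmj]; rewrite mulr_ge0 ?hq // hp0 // eq_sym.
- by apply: sumr_ge0 => m hmi; rewrite !mulr_ge0 ?hq // hp0 // eq_sym.
Qed.

Lemma main_ind n i j k : i != j ->
  0 <= aseq p lam n i j k <= HF p lam i j k (2 ^ n.+1).
Proof.
elim: n i j k => [|n IH] i j k hij /=.
- rewrite fmap_ge0 //=.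
  apply: (le_trans _ (key k 0 hij)).
  apply: fmap_mono => // a b c hab; rewrite lexx /=.
  exact: HF_ge0.
- rewrite fmap_ge0 //=; last by move=> a b c hab; case/andP: (IH a b c hab).
  have := key k (2 ^ n.+1).-1 hij; rewrite prednK ?expn_gt0 // -mul2n -expnS => h.
  apply: (le_trans _ h); apply: fmap_mono => // a b c hab.
Qed.

End Final.

Import Order.TTheory GRing.Theory Num.Theory.
Local Open Scope ring_scope.

Theorem lemmaA2 (R : realFieldType) (N : nat) (hN : (3 <= N)%N)
  (p : 'I_N -> 'I_N -> bool -> R)
  (hp : forall (i j : 'I_N) (k : bool), i != j -> 0 < p i j k < 1)
  (hsum : forall i : 'I_N,
      \sum_(j : 'I_N | j != i) \sum_(k : bool) p i j k = 1)
  (lam : R) (hlam : 0 <= lam <= 1) :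
  forall (n : nat) (i j : 'I_N) (k : bool), i != j ->
    aseq p lam n i j k
      <= \sum_(m < 2 ^ n.+1) hitP p i j k m * lam ^+ m.
Proof.
move=> n i j k hij.
have hp0 : forall a b c, a != b -> 0 <= p a b c.
  by move=> a b c h; case/andP: (hp a b c h) => /ltW.
have hl0 : 0 <= lam by case/andP: hlam.
by case/andP: (main_ind hp0 hl0 n k hij).
Qed.
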